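(* Assume the all-zero codeword is transmitted and $y\in\Sigma^n$ is received. (1) If the LP decoder makes a codeword error, then there exists an LP pseudocodeword $(h,z)$ with $h\ne0$ and $\Lambda(y)h^T\le0$. (2) If there exists an LP pseudocodeword $(h,z)$ with $h\ne0$ and $\Lambda(y)h^T<0$, then the LP decoder makes a codeword error.
   Context: Let $R$ be a finite ring with $q$ elements, $R^-=R\setminus\{0\}$, $\mathcal H$ an $m\times n$ matrix over $R$, $\mathcal C=\{c\in R^n:c\mathcal H^T=0\}$, $\mathcal I=\{1,\dots,n\}$, $\mathcal J=\{1,\dots,m\}$, $\mathcal I_j=\{i:\mathcal H_{j,i}\ne0\}$, $\mathcal C_j=\{b\in R^{\mathcal I_j}:\sum_{i\in\mathcal I_j}b_i\mathcal H_{j,i}=0\}$. Vectors in $\mathbb R^{(q-1)n}$ have coordinates $f_i^{(\alpha)}$, $i\in\mathcal I$, $\alpha\in R^-$. $\mathcal Q$ is the set of $(f,w)$, $f\in\mathbb R^{(q-1)n}$, $w=(w_{j,b})_{j\in\mathcal J,b\in\mathcal C_j}$, with $w_{j,b}\ge0$, $\sum_{b\in\mathcal C_j}w_{j,b}=1$ for each $j$, and $f_i^{(\alpha)}=\sum_{b\in\mathcal C_j,b_i=\alpha}w_{j,b}$ for all $j$, $i\in\mathcal I_j$, $\alpha\in R^-$. The channel is memoryless with input alphabet $R$, output alphabet $\Sigma$, transition probability (density) $p(y\mid a)$; $\lambda^{(\alpha)}(y)=\log(p(y\mid0)/p(y\mid\alpha))$ and $\Lambda(y)$ has coordinates $\lambda^{(\alpha)}(y_i)$.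 The LP decoder selects a minimizer $(f,w)$ of $\Lambda(y)f^T$ over $\mathcal Q$; with the all-zero codeword transmitted, it makes a codeword error when the selected $f$ is not the zero vector. An LP pseudocodeword is a pair $(h,z)$ with $h\in\mathbb R^{(q-1)n}$ and $z=(z_{j,b})_{j\in\mathcal J,b\in\mathcal C_j}$ nonnegative integers such that $h_i^{(\alpha)}=\sum_{b\in\mathcal C_j,b_i=\alpha}z_{j,b}$ for all $j\in\mathcal J$, $i\in\mathcal I_j$, $\alpha\in R^-$, and $\sum_{b\in\mathcal C_j}z_{j,b}=M$ for all $j$, with $M$ a nonnegative integer independent of $j$. *)

(* Defs.v *)
From HB Require Import structures.
From mathcomp Require Import all_boot all_order all_algebra.
From mathcomp Require Import reals exp.
Set Implicit Arguments. Unset Strict Implicit. Unset Printing Implicit Defensive.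
Import Order.TTheory GRing.Theory Num.Theory.
Local Open Scope ring_scope.

Section LPDecoding.
Variables (Rg : finNzRingType) (m n : nat) (H : 'M[Rg]_(m, n)).
Variable (real : realType).

Definition nzR := {a : Rg | a != 0}.

(* local code C_j: configurations b on I_j, encoded as functions on 'I_n
   vanishing outside I_j = {i | H j i != 0}, satisfying the j-th check *)
Definition localCode (j : 'I_m) : {set {ffun 'I_n -> Rg}} :=
  [set b : {ffun 'I_n -> Rg} |
     [forall i, (H j i == 0) ==> (b i == 0)] && (\sum_i b i * H j i == 0)].

Definition inQ (f : 'I_n -> nzR -> real) (w : 'I_m -> {ffun 'I_n -> Rg} -> real) : Prop :=
  (forall j b, b \in localCode j -> 0 <= w j b) /\
  (forall j, \sum_(b in localCode j) w j b = 1) /\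
  (forall j i (a : nzR), H j i != 0 ->
      f i a = \sum_(b in localCode j | b i == val a) w j b).

Definition llr (Sigma : Type) (p : Sigma -> Rg -> real) (y : Sigma) (a : nzR) : real :=
  ln (p y 0 / p y (val a)).

Definition cost (Sigma : Type) (p : Sigma -> Rg -> real) (y : 'I_n -> Sigma)
  (f : 'I_n -> nzR -> real) : real :=
  \sum_(i < n) \sum_(a : nzR) llr p (y i) a * f i a.

Definition LPminimizer (Sigma : Type) (p : Sigma -> Rg -> real) (y : 'I_n -> Sigma)
  f w : Prop :=
  inQ f w /\ forall f' w', inQ f' w' -> cost p y f <= cost p y f'.

Definition nonzero_vec (f : 'I_n -> nzR -> real) : Prop := exists i a, f i a != 0.

Definition LPpseudocodeword (h : 'I_n -> nzR -> real)
  (z : 'I_m -> {ffun 'I_n -> Rg} -> nat) : Prop :=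
  (forall j i (a : nzR), H j i != 0 ->
      h i a = (\sum_(b in localCode j | b i == val a) z j b)%:R) /\
  exists M : nat, forall j, (\sum_(b in localCode j) z j b)%N = M.

End LPDecoding.

(* Main.v *)
Require Import Defs.
From HB Require Import structures.
From mathcomp Require Import all_boot all_order all_algebra.
From mathcomp Require Import reals exp.
From Stdlib Require Import Classical.
From mathcomp Require Import lra.
From Stdlib Require Import FunctionalExtensionality.
Import Order.TTheory GRing.Theory Num.Theory.
Local Open Scope ring_scope.
Set Implicit Arguments. Unset Strict Implicit. Unset Printing Implicit Defensive.

Section Pf.
Variables (Rg : finNzRingType) (m n : nat) (H : 'M[Rg]_(m, n))
  (real : realType) (Sigma : Type) (p : Sigma -> Rg -> real) (y : 'I_n -> Sigma).

Local Notation C := (localCode H).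
Local Notation cost := (cost p y).
Local Notation lam i a := (llr p (y i) a).

Lemma costD (f g : 'I_n -> nzR Rg -> real) :
  cost (fun i a => f i a + g i a) = cost f + cost g.
Proof.
rewrite /Defs.cost -big_split /=; apply: eq_bigr => i _.
rewrite -big_split /=; apply: eq_bigr => a _; by rewrite mulrDr.
Qed.

Lemma costZ (c : real) (f : 'I_n -> nzR Rg -> real) :
  cost (fun i a => c * f i a) = c * cost f.
Proof.
rewrite /Defs.cost mulr_sumr; apply: eq_bigr => i _.
rewrite mulr_sumr; apply: eq_bigr => a _; by rewrite mulrCA.
Qed.

Lemma cost_ext (f g : 'I_n -> nzR Rg -> real) :
  (forall i a, lam i a * f i a = lam i a * g i a) -> cost f = cost g.
Proof.
move=> E; rewrite /Defs.cost; apply: eq_bigr => i _; apply: eq_bigr => a _; exact: E.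
Qed.

Lemma cost0 : cost (fun _ _ => 0) = 0.
Proof. by rewrite /Defs.cost big1 // => i _; rewrite big1 // => a _; rewrite mulr0. Qed.

Lemma cost_delta i0 a0 (c : real) :
  cost (fun i a => if (i == i0) && (a == a0) then c else 0) = lam i0 a0 * c.
Proof.
rewrite /Defs.cost (bigD1 i0) //= [X in _ + X]big1 ?addr0; last first.
  by move=> i /negbTE ->; rewrite big1 // => a _; rewrite mulr0.
rewrite (bigD1 a0) //= big1 ?addr0 ?eqxx //.
by move=> a /negbTE ->; rewrite andbF mulr0.
Qed.

Lemma nonzero_of_cost (f : 'I_n -> nzR Rg -> real) : cost f != 0 -> nonzero_vec f.
Proof.
move=> Hc; apply: NNPP => Hn; move/eqP: Hc; apply.
rewrite -cost0; apply: cost_ext => i a; congr (_ * _).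
by apply: NNPP => Hf; apply: Hn; exists i, a; apply/eqP.
Qed.

Lemma free_llr f w i0 a0 : LPminimizer H p y f w -> (forall j, H j i0 = 0) ->
  lam i0 a0 = 0.
Proof.
move=> [[Q1 [Q2 Q3]] Hmin] Hfree.
pose g := fun i a => if (i == i0) && (a == a0) then - lam i0 a0 else 0.
have HQ : inQ H (fun i a => f i a + g i a) w.
  split => //; split => // j i a Hji.
  rewrite /g; case: eqP => [Ei|_] /=; last by rewrite addr0; apply: Q3.
  by subst i; rewrite Hfree eqxx in Hji.
have := Hmin _ _ HQ; rewrite costD cost_delta lerDl mulrN oppr_ge0.
move=> Hle; apply/eqP; rewrite -sqrf_eq0 eq_le sqr_ge0 andbT.
by rewrite expr2.
Qed.

Lemma part2 h z f w : LPpseudocodeword H h z -> cost h < 0 ->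
  LPminimizer H p y f w -> nonzero_vec f.
Proof.
move=> [Hh [M HM]] Hc [[Q1 [Q2 Q3]] Hmin].
case: (posnP M) => [M0|Mpos].
  exfalso.
  have HQ : inQ H (fun i a => f i a + h i a) w.
    split => //; split => // j i a Hji.
    rewrite (Hh j) // -(Q3 j i a Hji).
    suff -> : (\sum_(b in C j | b i == val a) z j b)%N = 0%N by rewrite addr0.
    have HS := HM j; rewrite M0 in HS.
    apply/eqP; rewrite -leqn0 -[X in (_ <= X)%N]HS.
    by rewrite [X in (_ <= X)%N](bigID (fun b : {ffun _ -> _} => b i == val a) (fun b => b \in C j)) /= leq_addr.
  by have := Hmin _ _ HQ; rewrite costD lerDl leNgt Hc.
have MR : (M%:R : real) != 0 by rewrite pnatr_eq0 -lt0n.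
have HQ : inQ H (fun i a => M%:R^-1 * h i a) (fun j b => M%:R^-1 * (z j b)%:R).
  split; first by move=> j b _; rewrite mulr_ge0 // invr_ge0 ler0n.
  split.
    by move=> j; rewrite -mulr_sumr -natr_sum HM mulVf.
  move=> j i a Hji; rewrite (Hh j) // -mulr_sumr natr_sum //.
have := Hmin _ _ HQ; rewrite costZ => Hle.
apply: nonzero_of_cost; rewrite lt_eqF //; apply: (le_lt_trans Hle).
by rewrite pmulr_rlt0 // invr_gt0 ltr0n.
Qed.

Definition W := 'I_m -> {ffun 'I_n -> Rg} -> real.
Definition G (w : W) j i (a : Rg) := \sum_(b in C j | b i == a) w j b.
Definition Fw (w : W) : 'I_n -> nzR Rg -> real := fun i a =>
  if [pick j | H j i != 0] is Some j then G w j i (val a) else 0.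
Definition agree (w : W) := forall j j' i a, H j i != 0 -> H j' i != 0 -> a != 0 ->
  G w j i a = G w j' i a.
Definition valid (w : W) :=
  [/\ (forall j b, b \notin C j -> w j b = 0),
      (forall j b, 0 <= w j b),
      (forall j, \sum_(b in C j) w j b = 1) & agree w].
Definition costw w := cost (Fw w).
Definition zb : {ffun 'I_n -> Rg} := [ffun _ => 0].
Definition good w := [/\ valid w, (forall u, valid u -> costw w <= costw u) &
   exists j, w j zb != 1].

Lemma zb_in j : zb \in C j.
Proof.
rewrite inE; apply/andP; split.
  by apply/forallP => i; apply/implyP => _; rewrite ffunE.
by rewrite big1 // => i _; rewrite ffunE mul0r.
Qed.

Lemma validQ w : valid w -> inQ H (Fw w) w.
Proof.
case=> V1 V2 V3 V4; split => //; split => // j i a Hji.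
rewrite /Fw; case: pickP => [j0 Hj0|Hn]; last by move: (Hn j); rewrite Hji.
by apply: V4 => //; exact: (svalP a).
Qed.

Definition wt (w d : W) t : W := fun j b => w j b + t * d j b.

Lemma G_lin w d t j i a : G (wt w d t) j i a = G w j i a + t * G d j i a.
Proof. by rewrite /G big_split /= mulr_sumr. Qed.

Lemma Fw_lin w d t i a : Fw (wt w d t) i a = Fw w i a + t * Fw d i a.
Proof. rewrite /Fw; case: pickP => [j _|_]; by rewrite ?G_lin ?mulr0 ?addr0. Qed.

Lemma costw_lin w d t : costw (wt w d t) = costw w + t * costw d.
Proof.
rewrite /costw -costZ -costD; apply: cost_ext => i a; by rewrite Fw_lin.
Qed.

Definition wd : W := fun j b => (b == zb)%:R.

Lemma G_wd j i a : a != 0 -> G wd j i a = 0.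
Proof.
move=> Ha; rewrite /G big1 // => b /andP[_ /eqP bi]; rewrite /wd.
case: eqP => // Eb; move: Ha; by rewrite -bi Eb ffunE eqxx.
Qed.

Lemma valid_wd : valid wd.
Proof.
split.
- move=> j b Hb; rewrite /wd; case: eqP => // Eb; by rewrite Eb zb_in in Hb.
- by move=> j b; rewrite /wd ler0n.
- move=> j; rewrite (bigD1 zb) ?zb_in //= big1 ?addr0 /wd ?eqxx //.
  by move=> b /andP[_ /negbTE ->].
- by move=> j j' i a _ _ Ha; rewrite !G_wd.
Qed.

Lemma costw_wd : costw wd = 0.
Proof.
rewrite /costw -cost0; apply: cost_ext => i a; rewrite /Fw.
by case: pickP => [j _|_] //; rewrite G_wd // (svalP a).
Qed.

Lemma good_cost w : good w -> costw w <= 0.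
Proof. by case=> _ Hm _; rewrite -costw_wd; apply: Hm; exact: valid_wd. Qed.

Definition PCW := exists (h : 'I_n -> nzR Rg -> real) (z : 'I_m -> {ffun 'I_n -> Rg} -> nat),
        LPpseudocodeword H h z /\ nonzero_vec h /\ cost h <= 0.


Definition T := ('I_m * {ffun 'I_n -> Rg})%type.
Definition E := (T + 'I_m + ('I_m * 'I_m * 'I_n * Rg))%type.

Definition coef (R' : nzRingType) (w : W) (v : T) (e : E) : R' :=
  match e with
  | inl (inl u) => if w u.1 u.2 == 0 then (v == u)%:R else 0
  | inl (inr j) => ((v.1 == j) && (v.2 \in C j))%:R
  | inr (j, j', i, a) => if [&& H j i != 0, H j' i != 0 & a != 0] then
      ((v.1 == j) && ((v.2 \in C j) && (v.2 i == a)))%:R -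
      ((v.1 == j') && ((v.2 \in C j') && (v.2 i == a)))%:R else 0
  end.

Definition rhs (R' : nzRingType) (e : E) : R' :=
  match e with inl (inr _) => 1 | _ => 0 end.

Definition eval (w x : W) (e : E) := \sum_(v : T) x v.1 v.2 * coef real w v e.

Lemma sum_sel (x : W) j (P : pred {ffun 'I_n -> Rg}) :
  \sum_(v : T) x v.1 v.2 * ((v.1 == j) && P v.2)%:R = \sum_(b | P b) x j b.
Proof.
rewrite -(pair_bigA _ (fun a b => x a b * ((a == j) && P b)%:R)) /=.
rewrite (bigD1 j) //= [X in _ + X]big1 ?addr0; last first.
  by move=> k /negbTE Hk; rewrite big1 // => b _; rewrite Hk mulr0.
rewrite eqxx [RHS]big_mkcond; apply: eq_bigr => b _.
by case: (P b); rewrite ?mulr1 ?mulr0.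
Qed.

Lemma eval_E1 w x u : eval w x (inl (inl u)) = if w u.1 u.2 == 0 then x u.1 u.2 else 0.
Proof.
rewrite /eval /=; case: eqP => _; last by rewrite big1 // => v _; rewrite mulr0.
rewrite (bigD1 u) //= eqxx mulr1 big1 ?addr0 // => v /negbTE ->; by rewrite mulr0.
Qed.

Lemma eval_E2 w x j : eval w x (inl (inr j)) = \sum_(b in C j) x j b.
Proof. by rewrite /eval /= (sum_sel x j (fun b => b \in C j)). Qed.

Lemma eval_E3 w x j j' i a : eval w x (inr (j, j', i, a)) =
  if [&& H j i != 0, H j' i != 0 & a != 0] then G x j i a - G x j' i a else 0.
Proof.
rewrite /eval /=; case: ifP => _; last by rewrite big1 // => v _; rewrite mulr0.
under eq_bigr => v _ do rewrite mulrBr.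
rewrite sumrB (sum_sel x j (fun b => (b \in C j) && (b i == a))).
by rewrite (sum_sel x j' (fun b => (b \in C j') && (b i == a))).
Qed.

Lemma valid_eval w : valid w -> forall e, eval w w e = rhs real e.
Proof.
case=> V1 V2 V3 V4 [[u|j]|[[[j j'] i] a]].
- by rewrite eval_E1; case: eqP.
- by rewrite eval_E2 V3.
- rewrite eval_E3; case: ifP => //= /and3P[h1 h2 h3]; by rewrite (V4 j j' i a) // subrr.
Qed.

Lemma eval0 w d : (forall e, eval w d e = 0) ->
  [/\ (forall j b, w j b = 0 -> d j b = 0),
      (forall j, \sum_(b in C j) d j b = 0) & agree d].
Proof.
move=> He; split.
- move=> j b Hw; have := He (inl (inl (j, b))); by rewrite eval_E1 /= Hw eqxx.
- by move=> j; have := He (inl (inr j)); rewrite eval_E2.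
- move=> j j' i a h1 h2 h3; apply/eqP; rewrite -subr_eq0; apply/eqP.
  by have := He (inr (j, j', i, a)); rewrite eval_E3 h1 h2 h3.
Qed.

Lemma ratr_coef w v e : ratr (coef rat w v e) = coef real w v e.
Proof.
case: e => [[u|j]|[[[j j'] i] a]] /=.
- by case: ifP; rewrite ?ratr_nat ?rmorph0.
- by rewrite ratr_nat.
- case: ifP => _; last exact: (rmorph0 (ratr : {rmorphism rat -> real})).
  by rewrite (rmorphB (ratr : {rmorphism rat -> real})) !(rmorph_nat (ratr : {rmorphism rat -> real})).
Qed.

Definition supp (x : W) : {set T} := [set v : T | x v.1 v.2 != 0].

Lemma step w d (v0 : T) : valid w -> (forall j b, w j b = 0 -> d j b = 0) ->
  (forall j, \sum_(b in C j) d j b = 0) -> agree d -> d v0.1 v0.2 < 0 ->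
  exists t, [/\ 0 < t, valid (wt w d t) & supp (wt w d t) \proper supp w].
Proof.
move=> [V1 V2 V3 V4] D0 DS DA Hv0.
pose F := fun v : T => w v.1 v.2 / - d v.1 v.2.
case: (arg_minP (P := [pred v : T | d v.1 v.2 < 0]) F Hv0) => vs Hvs Hmin.
have dne : forall v : T, d v.1 v.2 != 0 -> 0 < w v.1 v.2.
  move=> v Hd; rewrite lt_def V2 andbT; apply: contra Hd => /eqP /D0 ->; by [].
have Hdvs : d vs.1 vs.2 != 0 by rewrite (lt_eqF Hvs).
have Ft : 0 < F vs by rewrite divr_gt0 ?dne // oppr_gt0.
exists (F vs); split => //.
- split.
  + move=> j b Hb; rewrite /wt V1 // D0 ?mulr0 ?addr0 //; exact: V1.
  + move=> j b; rewrite /wt; case: (ltP (d j b) 0) => Hd.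
      have := Hmin (j, b) Hd; rewrite /F /= ler_pdivlMr ?oppr_gt0 // => Hle.
      move: Hle; rewrite mulrN; set u := F vs * d j b; lra.
    by rewrite addr_ge0 // mulr_ge0 // ltW.
  + by move=> j; rewrite /wt big_split /= -mulr_sumr DS mulr0 addr0 V3.
  + by move=> j j' i a h1 h2 h3; rewrite !G_lin (V4 j j' i a) // (DA j j' i a).
- apply/properP; split.
    apply/subsetP => v; rewrite !inE /wt; apply: contra => /eqP Hw.
    by rewrite Hw (D0 _ _ Hw) mulr0 addr0.
  exists vs; rewrite !inE; first by rewrite gt_eqF ?dne.
  rewrite negbK /wt /F; apply/eqP.
  by rewrite invrN mulrN mulNr -mulrA mulVf // mulr1 subrr.
Qed.

Lemma neg_exists (x : W) j b0 : b0 \in C j -> x j b0 != 0 ->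
  \sum_(b in C j) x j b = 0 -> exists b, x j b < 0.
Proof.
move=> Hb0 Hx HS.
case: (pickP (fun b => (b \in C j) && (x j b < 0))) => [b /andP[_ Hb]|Hn].
  by exists b.
have Hnn : forall b, b \in C j -> 0 <= x j b.
  by move=> b Hb; have := Hn b; rewrite Hb /= => /negbT; rewrite -leNgt.
by move/eqP: Hx; case; exact: (psumr_eq0P Hnn HS Hb0).
Qed.

Lemma reduce w d : good w -> (forall e, eval w d e = 0) ->
  (exists v : T, d v.1 v.2 != 0) ->
  exists w', good w' /\ (#|supp w'| < #|supp w|)%N.
Proof.
move=> [Hv Hm [j0 Hj0]] He [[j1 b1] /= Hd1].
have [D0 DS DA] := eval0 He.
have Hv' := Hv; case: Hv' => V1 V2 V3 V4.
have Hb1 : b1 \in C j1.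
  by apply: contraT => Hn; move: Hd1; rewrite D0 ?eqxx // V1.
have [b2 Hb2] := neg_exists Hb1 Hd1 (DS j1).
pose nd : W := fun j b => - d j b.
have D0' : forall j b, w j b = 0 -> nd j b = 0 by move=> j b Hw; rewrite /nd D0 ?oppr0.
have DS' : forall j, \sum_(b in C j) nd j b = 0 by move=> j; rewrite sumrN DS oppr0.
have DA' : agree nd.
  by move=> j j' i a h1 h2 h3; rewrite /G !sumrN; congr (- _); apply: DA.
have [b3 Hb3] : exists b, nd j1 b < 0.
  by apply: (neg_exists Hb1); rewrite ?oppr_eq0 ?DS'.
have [t1 [t1p Hv1 Hp1]] := step (v0 := (j1, b2)) Hv D0 DS DA Hb2.
have [t2 [t2p Hv2 Hp2]] := step (v0 := (j1, b3)) Hv D0' DS' DA' Hb3.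
have E2 : wt w nd t2 = wt w d (- t2).
  apply: functional_extensionality => j; apply: functional_extensionality => b.
  by rewrite /wt /nd mulrN mulNr.
rewrite E2 in Hv2 Hp2.
have c1 := Hm _ Hv1; rewrite costw_lin lerDl pmulr_rge0 // in c1.
have c2 := Hm _ Hv2; rewrite costw_lin lerDl mulNr oppr_ge0 pmulr_rle0 // in c2.
have c0 : costw d = 0 by apply/eqP; rewrite eq_le c1 c2.
have Hgood : forall t, valid (wt w d t) -> wt w d t j0 zb != 1 -> good (wt w d t).
  move=> t Hvt Hn; split => //; last by exists j0.
  by move=> u Hu; rewrite costw_lin c0 mulr0 addr0; apply: Hm.
case: (eqVneq (wt w d t1 j0 zb) 1) => [E1|N1]; last first.
  by exists (wt w d t1); split; [apply: Hgood | apply: proper_card].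
case: (eqVneq (wt w d (- t2) j0 zb) 1) => [E3|N3]; last first.
  by exists (wt w d (- t2)); split; [apply: Hgood | apply: proper_card].
exfalso; move: E1 E3 Hj0; rewrite /wt => E1 E3 Hj0.
have : (t1 + t2) * d j0 zb = 0.
  rewrite mulrDl; move: E1 E3; rewrite mulNr; set u := t1 * d j0 zb; set u' := t2 * d j0 zb.
  lra.
move/eqP; rewrite mulf_eq0 => /orP[|/eqP Hd0].
  by rewrite gt_eqF // addr_gt0.
by move: E1 Hj0; rewrite Hd0 mulr0 addr0 => ->; rewrite eqxx.
Qed.


Lemma rat_or_red w : valid w ->
  (exists q : T -> rat, forall v, w v.1 v.2 = ratr (q v)) \/
  (exists d : W, (forall e, eval w d e = 0) /\ exists v : T, d v.1 v.2 != 0).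
Proof.
move=> Hv.
pose A : 'M[rat]_(#|{:T}|, #|{:E}|) :=
  \matrix_(k, l) coef rat w (enum_val k) (enum_val l).
pose Am : 'M[real]_(#|{:T}|, #|{:E}|) := map_mx ratr A.
have AmE : forall k l, Am k l = coef real w (enum_val k) (enum_val l).
  by move=> k l; rewrite !mxE ratr_coef.
pose rv (x : W) : 'rV[real]_#|{:T}| := \row_k x (enum_val k).1 (enum_val k).2.
have mulE : forall x l, (rv x *m Am) 0 l = eval w x (enum_val l).
  move=> x l; rewrite !mxE /eval (reindex _ (onW_bij _ (@enum_val_bij T))) /=.
  by apply: eq_bigr => k _; rewrite !mxE ratr_coef.
case Hfree: (row_free Am).
  left; pose bq : 'rV[rat]_#|{:E}| := \row_l rhs rat (enum_val l).
  have Ew : rv w *m Am = map_mx ratr bq.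
    apply/rowP => l; rewrite mulE valid_eval // !mxE.
    case: (enum_val l) => [[u|j]|x] /=;
      by rewrite ?(rmorph0 (ratr : {rmorphism rat -> real}))
                 ?(rmorph1 (ratr : {rmorphism rat -> real})).
  have : (map_mx ratr bq <= Am)%MS by apply/submxP; exists (rv w).
  rewrite map_submx => /submxP [q Eq].
  have Eq' : map_mx ratr q = rv w.
    by apply: (row_free_inj Hfree); rewrite /= Ew Eq (map_mxM (ratr : {rmorphism rat -> real})).
  exists (fun v => q 0 (enum_rank v)) => v.
  by have := congr1 (fun M : 'rV[real]_#|{:T}| => M 0 (enum_rank v)) Eq'; rewrite !mxE enum_rankK => ->.
right; have HK : kermx Am != 0 by rewrite kermx_eq0 Hfree.
case: (pickP (fun k => row k (kermx Am) != 0)) => [k Hk|Hn]; last first.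
  move/eqP: HK; case; apply/row_matrixP => k; rewrite row0; apply/eqP.
  by have := Hn k; move/negbFE.
set u := row k (kermx Am) in Hk.
have Hu : u *m Am = 0 by rewrite /u -row_mul mulmx_ker row0.
pose d : W := fun j b => u 0 (enum_rank (j, b)).
have Ed : rv d = u.
  by apply/rowP => k'; rewrite mxE /d -surjective_pairing enum_valK.
exists d; split.
  by move=> e; have := mulE d (enum_rank e); rewrite enum_rankK Ed Hu mxE => <-.
case: (pickP (fun k' => u 0 k' != 0)) => [k' Hk'|Hn]; last first.
  move/eqP: Hk; case; apply/rowP => k'; rewrite mxE; apply/eqP.
  by have := Hn k'; rewrite /u !mxE => /negbFE.
by exists (enum_val k'); rewrite /d -surjective_pairing enum_valK.
Qed.

Lemma construct w (q : T -> rat) : good w -> (forall v, w v.1 v.2 = ratr (q v)) -> PCW.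
Proof.
move=> Hg Hq; have Hc := good_cost Hg; case: Hg => Hv Hm [j0 Hj0].
have Hv' := Hv; case: Hv' => V1 V2 V3 V4.
have q0 : forall v, 0 <= q v by move=> v; rewrite -(ler0q real) -Hq.
pose dn v := `|denq (q v)|%N.
pose D := (\prod_(v : T) dn v)%N.
have dpos : forall v, (0 < dn v)%N by move=> v; rewrite absz_gt0 denq_neq0.
have Dpos : (0 < D)%N by rewrite prodn_gt0.
have dD : forall v, (dn v %| D)%N by move=> v; rewrite /D (bigD1 v) //= dvdn_mulr.
pose z j b := (`|numq (q (j, b))|%N * (D %/ dn (j, b)))%N.
have Hz : forall j b, (z j b)%:R = D%:R * w j b.
  move=> j b.
  have Hzq : ((z j b)%:R : rat) = D%:R * q (j, b).
    rewrite /z natrM natr_absz ger0_norm ?numq_ge0 // numqE [RHS]mulrC -mulrA.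
    congr (q (j, b) * _).
    rewrite -[in RHS](divnK (dD (j, b))) natrM mulrC; congr (_ * _).
    by rewrite /dn natr_absz gtr0_norm ?denq_gt0.
  have := congr1 (ratr : rat -> real) Hzq.
  rewrite (rmorph_nat (ratr : {rmorphism rat -> real})).
  rewrite (rmorphM (ratr : {rmorphism rat -> real})).
  by rewrite (rmorph_nat (ratr : {rmorphism rat -> real})) => ->; rewrite (Hq (j, b)).
have [_ [_ Q3]] := validQ Hv.
exists (fun i a => D%:R * Fw w i a), z; split; [split|split].
- move=> j i a Hji; rewrite (Q3 j i a Hji) mulr_sumr natr_sum.
  by apply: eq_bigr => b _; rewrite Hz.
- exists D => j; apply/eqP; rewrite -(eqr_nat real) natr_sum.
  by under eq_bigr do rewrite Hz; rewrite -mulr_sumr V3 mulr1.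
- case: (pickP (fun b => [&& b \in C j0, b != zb & w j0 b != 0])) => [b Hb|Hn];
    last first.
    exfalso; move: Hj0; rewrite -(V3 j0) (bigD1 zb) ?zb_in //= big1 ?addr0 ?eqxx //.
    move=> b /andP[Hb1 Hb2]; have := Hn b; rewrite Hb1 Hb2 /=; by move/negbFE/eqP.
  case/and3P: Hb => Hb1 Hb2 Hb3.
  have [i Hi] : exists i, b i != 0.
    apply: NNPP => Hn'; apply: (negP Hb2); apply/eqP/ffunP => i; rewrite ffunE.
    apply/eqP; apply: NNPP => Hbi; apply: Hn'; exists i; exact/negP.
  have Hji : H j0 i != 0.
    move: Hb1; rewrite inE => /andP[/forallP Hf _].
    by apply: contra Hi => Hh; exact: (implyP (Hf i) Hh).
  exists i, (exist _ (b i) Hi).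
  rewrite mulf_neq0 // ?pnatr_eq0 -?lt0n // (Q3 j0 i _ Hji) /=.
  rewrite (bigD1 b) /=; last by rewrite Hb1 eqxx.
  rewrite gt_eqF // ltr_pwDl ?sumr_ge0 // ?lt_def ?Hb3 ?V2 //.
- by rewrite costZ mulr_ge0_le0.
Qed.

Lemma vertex w : good w -> PCW.
Proof.
move=> Hg; move: {2}#|supp w| (leqnn #|supp w|) => k.
elim: k w Hg => [|k IH] w Hg Hk;
  (have Hv : valid w by case: Hg);
  (case: (rat_or_red Hv) => [[q Hq]|[d [He Hd]]]; first exact: construct Hg Hq);
  have [w' [Hg' Hlt]] := reduce Hg He Hd.
  by move: (leq_trans Hlt Hk).
by apply: (IH w' Hg'); rewrite -ltnS (leq_trans Hlt Hk).
Qed.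

Lemma part1 f w : LPminimizer H p y f w -> nonzero_vec f -> PCW.
Proof.
move=> Hmf [i [a Hfa]]; have Hmf' := Hmf; case: Hmf' => [[Q1 [Q2 Q3]] Hmin].
case: (pickP (fun j => H j i != 0)) => [j0 Hj0 | Hfree]; last first.
  exists (fun i' a' => if (i' == i) && (a' == a) then 1 else 0), (fun _ _ => 0%N).
  split; [split|split].
  - move=> j i' a' Hji'; case: eqP => [Ei|_] /=; last by rewrite big1_eq.
    by subst i'; move: (Hfree j); rewrite Hji'.
  - by exists 0%N => j; rewrite big1_eq.
  - by exists i, a; rewrite !eqxx oner_neq0.
  - rewrite cost_delta (free_llr a Hmf) ?mul0r // => j.
    by apply/eqP; move: (Hfree j); rewrite /= => /negbFE.
pose w' : W := fun j b => if b \in C j then w j b else 0.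
have HG : forall j i a, G w' j i a = G w j i a.
  move=> j i' a'; apply: eq_bigr => b /andP[Hb _]; by rewrite /w' Hb.
have Hv : valid w'.
  split.
  - by move=> j b Hb; rewrite /w' (negbTE Hb).
  - by move=> j b; rewrite /w'; case: ifP => // Hb; apply: Q1.
  - by move=> j; rewrite -(Q2 j); apply: eq_bigr => b Hb; rewrite /w' Hb.
  - move=> j j' i' a' Hj Hj' Ha; rewrite !HG.
    by rewrite /G -[a']/(val (exist (fun x => x != 0) a' Ha)) -Q3 // -Q3.
have Hc : costw w' = cost f.
  apply: cost_ext => i' a'; rewrite /Fw; case: pickP => [j Hj|Hn].
    by rewrite HG /G -Q3.
  rewrite (free_llr a' Hmf) ?mul0r // => j.
  by apply/eqP; move: (Hn j); rewrite /= => /negbFE.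
apply: (@vertex w'); split => //.
  by move=> u Hu; rewrite Hc; apply: Hmin; exact: validQ.
exists j0.
have HG0 : G w j0 i (val a) != 0 by rewrite /G -Q3.
case: (pickP (fun b => [&& b \in C j0, b i == val a & w j0 b != 0])) => [b Hb | Hn];
  last first.
  move: HG0; rewrite /G big1 ?eqxx // => b /andP[Hb1 Hb2].
  by move: (Hn b); rewrite Hb1 Hb2 /= => /negbFE/eqP.
case/and3P: Hb => Hb1 /eqP Hb2 Hb3.
have bz : b != zb.
  apply/eqP => Ebz; move: (svalP a); by rewrite -Hb2 Ebz ffunE eqxx.
have Hpos : 0 < w' j0 b by rewrite /w' Hb1 lt_def Hb3 Q1.
case: Hv => _ V2 V3 _.
have := V3 j0; rewrite (bigD1 zb) ?zb_in //= (bigD1 b) /=; last by rewrite Hb1 bz.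
set S := (X in _ + (_ + X) = _) => E.
have HS : 0 <= S by apply: sumr_ge0 => *; apply: V2.
move: E Hpos HS; set u := w' j0 zb; set v := w' j0 b.
move=> E Hpos HS; apply/eqP => Eu; move: E; rewrite Eu; lra.
Qed.
End Pf.

Unset Implicit Arguments.
Set Strict Implicit.
Theorem theorem2 (Rg : finNzRingType) (m n : nat) (H : 'M[Rg]_(m, n))
  (real : realType) (Sigma : Type) (p : Sigma -> Rg -> real)
  (p_pos : forall s a, 0 < p s a) (y : 'I_n -> Sigma) :
  (forall (f : 'I_n -> nzR Rg -> real) (w : 'I_m -> {ffun 'I_n -> Rg} -> real),
      LPminimizer H p y f w -> nonzero_vec f ->
      exists (h : 'I_n -> nzR Rg -> real) (z : 'I_m -> {ffun 'I_n -> Rg} -> nat),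
        LPpseudocodeword H h z /\ nonzero_vec h /\ cost p y h <= 0) /\
  ((exists (h : 'I_n -> nzR Rg -> real) (z : 'I_m -> {ffun 'I_n -> Rg} -> nat),
        LPpseudocodeword H h z /\ nonzero_vec h /\ cost p y h < 0) ->
   forall (f : 'I_n -> nzR Rg -> real) (w : 'I_m -> {ffun 'I_n -> Rg} -> real),
      LPminimizer H p y f w -> nonzero_vec f).
Proof.
split.
- move=> f w Hm Hn; exact: (part1 Hm Hn).
- move=> [h [z [Hp [_ Hc]]]] f w Hm; exact: (part2 Hp Hc Hm).
Qed.
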